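(* Let $\varepsilon\ge0$ and $\phi:\mathcal{B}\to\mathcal{C}\subseteq\mathcal{B}$ satisfy $\|\phi(b)-b\|_1\le\varepsilon$ for all $b\in\mathcal{B}$. Let $\pi:\mathcal{B}\to\Delta(\mathcal{A})$ satisfy $\|\pi(b_1)-\pi(b_2)\|_1\le L_\pi\|b_1-b_2\|_1$ for all $b_1,b_2\in\mathcal{B}$, and let $[\pi_\phi]_{\rm true}(b):=\pi(\phi(b))$. Then $$\big\|V^\pi_{\rm true}-V^{[\pi_\phi]_{\rm true}}_{\rm true}\big\|_\infty\le\frac{R_{\max}L_\pi\varepsilon}{1-\gamma}+\frac{\gamma R_{\max}L_\pi\varepsilon}{(1-\gamma)^2}.$$
   Context: Finite POMDP with finite $\mathcal{S},\mathcal{A},\mathcal{O}$, transition $\mathbb{T}$, emission $\mathbb{O}$, reward $r:\mathcal{S}\times\mathcal{A}\to[0,R_{\max}]$, discount $\gamma\in[0,1)$. $P(o\mid b,a)=\sum_{s,s'}b(s)\mathbb{T}(s'\mid s,a)\mathbb{O}(o\mid s')$ and $b^{o,a}(s')\propto\sum_s b(s)\mathbb{T}(s'\mid s,a)\mathbb{O}(o\mid s')$. $\mathcal{B}\subseteq\Delta(\mathcal{S})$ is the set of reachable beliefs. The belief MDP has reward $r(b,a)=\sum_s b(s)r(s,a)$ and transitions $b\mapsto b^{o,a}$ w.p. $P(o\mid b,a)$; for a belief policy $\pi$, $V^\pi_{\rm true}(b)=\mathbb{E}[\sum_{t\ge0}\gamma^t r(b_t,a_t)\mid b_0=b]$, $a_t\sim\pi(b_t)$.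 *)

(* Defs.v *)
From HB Require Import structures.
From mathcomp Require Import all_boot all_order all_algebra.
From mathcomp Require Import all_classical all_reals all_analysis.
Set Implicit Arguments. Unset Strict Implicit. Unset Printing Implicit Defensive.
Import Order.TTheory GRing.Theory Num.Theory numFieldNormedType.Exports.
Local Open Scope ring_scope.

Section POMDP.
Variables (R : realType) (S A O : finType).
(* transition T s a s' = T(s'|s,a); emission Em s' o = O(o|s') *)
Variables (T : S -> A -> S -> R) (Em : S -> O -> R) (r : S -> A -> R) (gamma : R).

Definition is_dist (X : finType) (p : {ffun X -> R}) : Prop :=
  (forall x, 0 <= p x) /\ \sum_x p x = 1.

Definition l1dist (X : finType) (p q : {ffun X -> R}) : R :=
  \sum_x `|p x - q x|.

Definition Pobs (b : {ffun S -> R}) (a : A) (o : O) : R :=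
  \sum_s \sum_s' b s * T s a s' * Em s' o.

(* belief update b^{o,a} (normalized; irrelevant when Pobs b a o = 0) *)
Definition bupd (b : {ffun S -> R}) (a : A) (o : O) : {ffun S -> R} :=
  [ffun s' => (\sum_s b s * T s a s' * Em s' o) / Pobs b a o].

Definition rb (b : {ffun S -> R}) (a : A) : R := \sum_s b s * r s a.

Inductive reachable (b0 : {ffun S -> R}) : {ffun S -> R} -> Prop :=
| reach0 : reachable b0 b0
| reachS b a o : reachable b0 b -> 0 < Pobs b a o -> reachable b0 (bupd b a o).

(* n-step expected discounted return E[sum_{t<n} gamma^t r(b_t,a_t) | b_0 = b]
   of the belief policy pi, computed by unfolding the expectation *)
Fixpoint Vn (pi : {ffun S -> R} -> {ffun A -> R}) (n : nat) (b : {ffun S -> R}) : R :=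
  match n with
  | 0 => 0
  | n.+1 => \sum_a pi b a *
              (rb b a + gamma * \sum_o Pobs b a o * Vn pi n (bupd b a o))
  end.

Definition Vtrue (pi : {ffun S -> R} -> {ffun A -> R}) (b : {ffun S -> R}) : R :=
  limn (fun n => Vn pi n b).

End POMDP.

(* Main.v *)
Require Import Defs.
From HB Require Import structures.
From mathcomp Require Import all_boot all_order all_algebra.
From mathcomp Require Import all_classical all_reals all_analysis.
From mathcomp Require Import ring lra.
Import Order.TTheory GRing.Theory Num.Theory numFieldNormedType.Exports.
Local Open Scope ring_scope.

Section Proof5.
Variables (R : realType) (S A O : finType).
Variables (T : S -> A -> S -> R) (Em : S -> O -> R) (r : S -> A -> R) (Rmax gamma : R) (b0 : {ffun S -> R}).
Hypothesis HT : forall s a, is_dist [ffun s' => T s a s'].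
Hypothesis HEm : forall s', is_dist [ffun o => Em s' o].
Hypothesis Hr : forall s a, 0 <= r s a <= Rmax.
Hypothesis Hg0 : 0 <= gamma.
Hypothesis Hg1 : gamma < 1.
Hypothesis Hb0 : is_dist b0.

Lemma T0 s a s' : 0 <= T s a s'.
Proof. by have [h _] := HT s a; have := h s'; rewrite ffunE. Qed.
Lemma T1 s a : \sum_s' T s a s' = 1.
Proof. by have [_ h] := HT s a; rewrite -h; apply: eq_bigr => x _; rewrite ffunE. Qed.
Lemma Em0 s o : 0 <= Em s o.
Proof. by have [h _] := HEm s; have := h o; rewrite ffunE. Qed.
Lemma Em1 s : \sum_o Em s o = 1.
Proof. by have [_ h] := HEm s; rewrite -h; apply: eq_bigr => x _; rewrite ffunE. Qed.

Lemma Pobs_ge0 b a o : is_dist b -> 0 <= Pobs T Em b a o.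
Proof.
move=> [hb _]; apply: sumr_ge0 => s _; apply: sumr_ge0 => s' _.
by rewrite !mulr_ge0 // ?T0 ?Em0.
Qed.

Lemma Pobs_sum b a : is_dist b -> \sum_o Pobs T Em b a o = 1.
Proof.
move=> [hb hs]; rewrite /Pobs exchange_big /= -hs; apply: eq_bigr => s _.
rewrite exchange_big /= -[RHS]mulr1 -(T1 s a) mulr_sumr; apply: eq_bigr => s' _.
by rewrite -[X in _ = X]mulr1 -(Em1 s') !mulr_sumr.
Qed.

Lemma reach_dist b : reachable T Em b0 b -> is_dist b.
Proof.
elim=> // {}b a o _ [hb hs] hP; split.
  move=> s'; rewrite ffunE divr_ge0 ?(ltW hP) //.
  by apply: sumr_ge0 => s _; rewrite !mulr_ge0 // ?T0 ?Em0.
under eq_bigr do rewrite ffunE.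
by rewrite -mulr_suml /Pobs exchange_big /= divff // gt_eqF.
Qed.

Lemma rb_bnd b a : is_dist b -> 0 <= rb r b a <= Rmax.
Proof.
move=> [hb hs]; apply/andP; split.
  by apply: sumr_ge0 => s _; rewrite mulr_ge0 //; case/andP: (Hr s a).
rewrite -[X in _ <= X]mul1r -hs mulr_suml; apply: ler_sum => s _.
by rewrite ler_wpM2l //; case/andP: (Hr s a).
Qed.

Lemma Pmono b a o x y : is_dist b -> (0 < Pobs T Em b a o -> x <= y) ->
  Pobs T Em b a o * x <= Pobs T Em b a o * y.
Proof.
move=> hb h; have := Pobs_ge0 b a o hb; rewrite le_eqVlt => /orP[/eqP <-|hp].
  by rewrite !mul0r.
by rewrite ler_wpM2l ?(ltW hp) ?h.
Qed.

Lemma exp_bnd b a (g : O -> R) M : is_dist b ->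
  (forall o, 0 < Pobs T Em b a o -> 0 <= g o <= M) ->
  0 <= \sum_o Pobs T Em b a o * g o <= M.
Proof.
move=> hb h; apply/andP; split.
  apply: sumr_ge0 => o _; rewrite -(mulr0 (Pobs T Em b a o)).
  by apply: Pmono => // /h /andP[].
rewrite -[X in _ <= X]mul1r -(Pobs_sum b a hb) mulr_suml; apply: ler_sum => o _.
by apply: Pmono => // /h /andP[].
Qed.

Lemma exp_diff b a (g1 g2 : O -> R) D : is_dist b ->
  (forall o, 0 < Pobs T Em b a o -> `|g1 o - g2 o| <= D) ->
  `|\sum_o Pobs T Em b a o * g1 o - \sum_o Pobs T Em b a o * g2 o| <= D.
Proof.
move=> hb h; rewrite -sumrB.
apply: le_trans (ler_norm_sum _ _ _) _.
rewrite -[X in _ <= X]mul1r -(Pobs_sum b a hb) mulr_suml; apply: ler_sum => o _.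
rewrite -mulrBr normrM ger0_norm ?Pobs_ge0 //.
by apply: Pmono => // /h.
Qed.

Lemma pol_bnd (p : {ffun A -> R}) (Q : A -> R) M : is_dist p ->
  (forall a, 0 <= Q a <= M) -> 0 <= \sum_a p a * Q a <= M.
Proof.
move=> [hp hs] h; apply/andP; split.
  by apply: sumr_ge0 => a _; rewrite mulr_ge0 //; case/andP: (h a).
rewrite -[X in _ <= X]mul1r -hs mulr_suml; apply: ler_sum => a _.
by rewrite ler_wpM2l //; case/andP: (h a).
Qed.

Lemma pol_diff (p : {ffun A -> R}) (Q1 Q2 : A -> R) D : is_dist p ->
  (forall a, `|Q1 a - Q2 a| <= D) ->
  `|\sum_a p a * Q1 a - \sum_a p a * Q2 a| <= D.
Proof.
move=> [hp hs] h; rewrite -sumrB.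
apply: le_trans (ler_norm_sum _ _ _) _.
rewrite -[X in _ <= X]mul1r -hs mulr_suml; apply: ler_sum => a _.
by rewrite -mulrBr normrM ger0_norm // ler_wpM2l.
Qed.

Lemma pol_diff2 (p q : {ffun A -> R}) (Q : A -> R) M :
  (forall a, `|Q a| <= M) ->
  `|\sum_a p a * Q a - \sum_a q a * Q a| <= l1dist p q * M.
Proof.
move=> h; rewrite -sumrB.
apply: le_trans (ler_norm_sum _ _ _) _.
rewrite /l1dist mulr_suml; apply: ler_sum => a _.
by rewrite -mulrBl normrM ler_wpM2l.
Qed.

Lemma ne_of_sum (X : finType) (p : {ffun X -> R}) : \sum_x p x = 1 -> exists x : X, True.
Proof.
case: (pickP (@predT X)) => [x|h]; first by exists x.
by rewrite big_pred0 // => /esym/eqP; rewrite oner_eq0.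
Qed.

Definition M := Rmax / (1 - gamma).

Lemma Rmax_ge0 : (exists a : A, True) -> 0 <= Rmax.
Proof.
case=> a _; case: Hb0 => _ hs.
have [s _] := ne_of_sum _ _ hs.
by case/andP: (Hr s a) => h1 h2; apply: le_trans h2.
Qed.

Lemma M_eq : Rmax + gamma * M = M.
Proof. by rewrite /M; field; rewrite subr_eq0 gt_eqF. Qed.

Section Pol.
Variable pol : {ffun S -> R} -> {ffun A -> R}.
Hypothesis Hpol : forall b, reachable T Em b0 b -> is_dist (pol b).

Lemma M_ge0 b : reachable T Em b0 b -> 0 <= M.
Proof.
move=> hb; rewrite /M divr_ge0 ?subr_ge0 ?(ltW Hg1) //.
case: (Hpol b hb) => hp hs.
have [a _] := ne_of_sum _ _ hs.
by apply: Rmax_ge0; exists a.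
Qed.

Lemma Vn_bnd n b : reachable T Em b0 b -> 0 <= Vn T Em r gamma pol n b <= M.
Proof.
elim: n b => [|n IH] b hb /=.
  rewrite lexx /M divr_ge0 ?subr_ge0 ?(ltW Hg1) //.
  case: (Hpol b hb) => hp hs.
  have [a _] := ne_of_sum _ _ hs.
  by apply: Rmax_ge0; exists a.
apply: pol_bnd; first exact: Hpol.
move=> a; have hd := reach_dist b hb.
have /andP[h1 h2] := rb_bnd b a hd.
have /andP[h3 h4] : 0 <= \sum_o Pobs T Em b a o * Vn T Em r gamma pol n (bupd T Em b a o) <= M.
  by apply: exp_bnd => // o hP; apply: IH; apply: reachS.
rewrite addr_ge0 ?mulr_ge0 //= -M_eq lerD // ler_wpM2l //.
Qed.

Lemma Q_bnd n a b : reachable T Em b0 b -> 0 <= rb r b a + gamma * \sum_o Pobs T Em b a o * Vn T Em r gamma pol n (bupd T Em b a o) <= M.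
Proof.
move=> hb; have hd := reach_dist b hb.
have /andP[h1 h2] := rb_bnd b a hd.
have /andP[h3 h4] : 0 <= \sum_o Pobs T Em b a o * Vn T Em r gamma pol n (bupd T Em b a o) <= M.
  by apply: exp_bnd => // o hP; apply: Vn_bnd; apply: reachS.
rewrite addr_ge0 ?mulr_ge0 //= -M_eq lerD // ler_wpM2l //.
Qed.

Lemma Vn_mono n b : reachable T Em b0 b ->
  Vn T Em r gamma pol n b <= Vn T Em r gamma pol n.+1 b.
Proof.
elim: n b => [|n IH] b hb.
  by have /andP[] := Vn_bnd 1 b hb.
rewrite [Vn _ _ _ _ _ n.+1 _]/= [Vn _ _ _ _ _ n.+2 _]/=.
case: (Hpol b hb) => hp _; apply: ler_sum => a _; rewrite ler_wpM2l // lerD2l ler_wpM2l //.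
apply: ler_sum => o _; apply: Pmono; first exact: reach_dist.
by move=> hP; apply: IH; apply: reachS.
Qed.

Lemma Vn_cvg b : reachable T Em b0 b -> cvgn (fun n => Vn T Em r gamma pol n b).
Proof.
move=> hb; apply: nondecreasing_is_cvgn.
  by apply: homo_leq => //; [move=> *; apply: le_trans; eassumption| move=> i; exact: Vn_mono].
exists M => _ [n _ <-]; by have /andP[] := Vn_bnd n b hb.
Qed.

End Pol.

Variables (phi : {ffun S -> R} -> {ffun S -> R}) (pi : {ffun S -> R} -> {ffun A -> R}) (eps Lpi : R).
Hypothesis He : 0 <= eps.
Hypothesis HL : 0 <= Lpi.
Hypothesis Hphr : forall b, reachable T Em b0 b -> reachable T Em b0 (phi b).
Hypothesis Hphe : forall b, reachable T Em b0 b -> l1dist (phi b) b <= eps.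
Hypothesis Hpi : forall b, reachable T Em b0 b -> is_dist (pi b).
Hypothesis HLip : forall b1 b2, reachable T Em b0 b1 -> reachable T Em b0 b2 ->
     l1dist (pi b1) (pi b2) <= Lpi * l1dist b1 b2.

Lemma Hpi' b : reachable T Em b0 b -> is_dist ((fun b' => pi (phi b')) b).
Proof. by move=> hb; apply: Hpi; apply: Hphr. Qed.

Definition C := Rmax * Lpi * eps / (1 - gamma) ^+ 2.

Lemma C_eq : Lpi * eps * M + gamma * C = C.
Proof. by rewrite /C /M; field; rewrite subr_eq0 gt_eqF. Qed.

Lemma l1distC (X : finType) (p q : {ffun X -> R}) : l1dist p q = l1dist q p.
Proof. by apply: eq_bigr => x _; rewrite distrC. Qed.

Lemma Vn_diff n b : reachable T Em b0 b ->
  `|Vn T Em r gamma pi n b - Vn T Em r gamma (fun b' => pi (phi b')) n b| <= C.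
Proof.
elim: n b => [|n IH] b hb.
  rewrite /= subrr normr0 /C mulr_ge0 ?invr_ge0 ?exprn_ge0 ?subr_ge0 ?(ltW Hg1) //.
  rewrite mulr_ge0 // mulr_ge0 //.
  case: (Hpi b hb) => hp hs; have [a _] := ne_of_sum _ _ hs.
  by apply: Rmax_ge0; exists a.
rewrite /=.
set Q1 := fun a => rb r b a + gamma * \sum_o Pobs T Em b a o * Vn T Em r gamma pi n (bupd T Em b a o).
set Q2 := fun a => rb r b a + gamma * \sum_o Pobs T Em b a o * Vn T Em r gamma (fun b' => pi (phi b')) n (bupd T Em b a o).
rewrite -/(Q1 _) -/(Q2 _).
have -> : \sum_a pi b a * Q1 a - \sum_a pi (phi b) a * Q2 a =
  (\sum_a pi b a * Q1 a - \sum_a pi (phi b) a * Q1 a) +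
  (\sum_a pi (phi b) a * Q1 a - \sum_a pi (phi b) a * Q2 a).
  by rewrite addrA subrK.
rewrite -C_eq; apply: le_trans (ler_normD _ _) _; apply: lerD.
  apply: le_trans (pol_diff2 _ _ _ M _) _.
    move=> a; have /andP[h1 h2] := Q_bnd pi Hpi n a b hb.
    by rewrite ger0_norm.
  rewrite ler_wpM2r ?(M_ge0 pi Hpi b hb) //.
  apply: le_trans (HLip b (phi b) hb (Hphr b hb)) _.
  by rewrite ler_wpM2l // l1distC Hphe.
apply: pol_diff; first exact: Hpi'.
move=> a; rewrite /Q1 /Q2 /= opprD addrACA subrr add0r -mulrBr normrM ger0_norm //.
rewrite ler_wpM2l //; apply: exp_diff; first exact: reach_dist.
by move=> o hP; apply: IH; apply: reachS.
Qed.

End Proof5.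
Theorem mainTheorem5 (R : realType) (S A O : finType)
  (T : S -> A -> S -> R) (Em : S -> O -> R) (r : S -> A -> R)
  (Rmax gamma : R) (b0 : {ffun S -> R})
  (phi : {ffun S -> R} -> {ffun S -> R})
  (pi : {ffun S -> R} -> {ffun A -> R})
  (eps Lpi : R) :
  (forall s a, is_dist [ffun s' => T s a s']) ->
  (forall s', is_dist [ffun o => Em s' o]) ->
  (forall s a, 0 <= r s a <= Rmax) ->
  0 <= gamma -> gamma < 1 ->
  is_dist b0 ->
  0 <= eps -> 0 <= Lpi ->
  (* phi : B -> C, with C a subset of B *)
  (forall b, reachable T Em b0 b -> reachable T Em b0 (phi b)) ->
  (forall b, reachable T Em b0 b -> l1dist (phi b) b <= eps) ->
  (forall b, reachable T Em b0 b -> is_dist (pi b)) ->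
  (forall b1 b2, reachable T Em b0 b1 -> reachable T Em b0 b2 ->
     l1dist (pi b1) (pi b2) <= Lpi * l1dist b1 b2) ->
  forall b, reachable T Em b0 b ->
    `| Vtrue T Em r gamma pi b - Vtrue T Em r gamma (fun b' => pi (phi b')) b |
      <= Rmax * Lpi * eps / (1 - gamma)
         + gamma * Rmax * Lpi * eps / (1 - gamma) ^+ 2.
Proof.
move=> HT HEm Hr Hg0 Hg1 Hb0 He HL Hphr Hphe Hpi HLip b hb.
have Hpi' : forall b', reachable T Em b0 b' -> is_dist ((fun b2 => pi (phi b2)) b').
  by move=> b' h; apply: Hpi; apply: Hphr.
have c1 := Vn_cvg _ _ _ _ _ _ _ _ _ _ HT HEm Hr Hg0 Hg1 Hb0 _ Hpi _ hb.
have c2 := Vn_cvg _ _ _ _ _ _ _ _ _ _ HT HEm Hr Hg0 Hg1 Hb0 _ Hpi' _ hb.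
have -> : Rmax * Lpi * eps / (1 - gamma) + gamma * Rmax * Lpi * eps / (1 - gamma) ^+ 2
  = C _ Rmax gamma eps Lpi.
  by rewrite /C; field; rewrite subr_eq0 gt_eqF.
rewrite /Vtrue -limB // -lim_norm; last exact: is_cvgB.
apply: limr_le; first by apply: is_cvg_norm; exact: is_cvgB.
apply: nearW => n /=.
exact: (Vn_diff _ _ _ _ _ _ _ _ _ _ HT HEm Hr Hg0 Hg1 Hb0 _ _ _ _ He HL Hphr Hphe Hpi HLip n _ hb).
Qed.
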